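(* Let $G$ be a dense $K_4^3\cup e$-free $3$-graph on $[n]$ with $\lambda(G)>\frac{\sqrt3}{18}$, and let $\vec x$ be an optimum weight vector for $G$. Then for any two distinct vertices $a,b\in[n]$, $x_a+x_b\le\frac{3-\sqrt3}{3}$.
   Context: $K_4^3\cup e$ is the $3$-graph on $\{1,\dots,7\}$ with edges $\{123,124,134,234,567\}$. For a $3$-graph $G$ on $[n]$, $\lambda(G,\vec x)=\sum_{e\in E(G)}\prod_{i\in e}x_i$ and $\lambda(G)=\max\{\lambda(G,\vec x):\sum_ix_i=1,x_i\ge0\}$; an optimum weight vector is a maximizer. $G$ is dense if $\lambda(G')<\lambda(G)$ for every proper subgraph $G'$. *)

(* Defs.v *)
From mathcomp Require Import all_boot all_order all_algebra.
From mathcomp Require Import all_classical all_reals.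
Set Implicit Arguments. Unset Strict Implicit. Unset Printing Implicit Defensive.
Import Order.TTheory GRing.Theory Num.Theory.
Local Open Scope ring_scope.
Local Open Scope classical_set_scope.

Definition is_3graph (n : nat) (G : {set {set 'I_n}}) : Prop :=
  forall e, e \in G -> #|e| = 3%N.

Definition lagr_poly (R : realType) (n : nat) (G : {set {set 'I_n}})
  (x : 'I_n -> R) : R :=
  \sum_(e in G) \prod_(i in e) x i.

Definition in_simplex (R : realType) (n : nat) (x : 'I_n -> R) : Prop :=
  (forall i, 0 <= x i) /\ \sum_(i < n) x i = 1.

Definition lagrangian_on (R : realType) (n : nat) (V : {set 'I_n})
  (G : {set {set 'I_n}}) : R :=
  sup [set lagr_poly G x | x in
        [set x : 'I_n -> R | in_simplex x /\ (forall i, i \notin V -> x i = 0)]].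

Local Close Scope classical_set_scope.

Definition lagrangian (R : realType) (n : nat) (G : {set {set 'I_n}}) : R :=
  lagrangian_on R (finset.setT : {set 'I_n}) G.

Definition optimum_weight (R : realType) (n : nat) (G : {set {set 'I_n}})
  (x : 'I_n -> R) : Prop :=
  in_simplex x /\ lagr_poly G x = lagrangian R G.

Definition dense (R : realType) (n : nat) (G : {set {set 'I_n}}) : Prop :=
  forall (V' : {set 'I_n}) (E' : {set {set 'I_n}}),
    E' \subset G ->
    (forall e, e \in E' -> e \subset V') ->
    (V' != (finset.setT : {set 'I_n})) || (E' != G) ->
    lagrangian_on R V' E' < lagrangian R G.

(* K_4^3 \cup e on vertices {0..6} (= {1..7} shifted) *)
Definition v7 (k : nat) : 'I_7 := inord k.
Definition K43e : {set {set 'I_7}} :=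
  [set [set v7 0; v7 1; v7 2]; [set v7 0; v7 1; v7 3]; [set v7 0; v7 2; v7 3];
       [set v7 1; v7 2; v7 3]; [set v7 4; v7 5; v7 6]].

(* G contains no (not necessarily induced) copy of K_4^3 \cup e *)
Definition K43e_free (n : nat) (G : {set {set 'I_n}}) : Prop :=
  ~ exists f : 'I_7 -> 'I_n, injective f /\ forall e, e \in K43e -> f @: e \in G.

(* Main.v *)
Require Import Defs.
From mathcomp Require Import all_boot all_order all_algebra.
From mathcomp Require Import all_classical all_reals.
From mathcomp Require Import ring lra.
Import Order.TTheory GRing.Theory Num.Theory.
Local Open Scope ring_scope.

Section S.
Variables (R : realType) (n : nat) (G : {set {set 'I_n}}).

Lemma simplex_le1 (y : 'I_n -> R) i : in_simplex y -> y i <= 1.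
Proof.
move=> [y0 y1]; rewrite -y1 (bigD1 i) //= lerDl.
by apply: sumr_ge0 => j _.
Qed.

Lemma lagr_le_card (y : 'I_n -> R) : in_simplex y -> lagr_poly G y <= #|G|%:R.
Proof.
move=> hy; rewrite /lagr_poly -sumr_const.
apply: ler_sum => e _.
have : 0 <= \prod_(i in e) y i <= 1.
  elim/big_ind: _ => //; first by rewrite ler01 lexx.
  - move=> u v /andP[u0 u1] /andP[v0 v1]; apply/andP; split; first exact: mulr_ge0.
    by rewrite -[1]mulr1; apply: ler_pM.
  - by move=> i _; rewrite (@simplex_le1 y i hy) andbT; case: hy.
by case/andP.
Qed.

Lemma le_lagr (y : 'I_n -> R) : in_simplex y -> lagr_poly G y <= lagrangian R G.
Proof.
move=> hy; rewrite /lagrangian /lagrangian_on.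
set E := (X in sup X).
have hE : has_ubound E.

  exists #|G|%:R; move=> r [z [hz _] <-]; exact: lagr_le_card.
apply: (ub_le_sup hE).
rewrite /E; exists y => //; split => // i; by rewrite finset.in_setT.
Qed.

Lemma sum_single (T : finType) (P : pred T) (F : T -> R) d1 :
  (forall d, P d -> d = d1) -> \sum_d (P d)%:R * F d = (P d1)%:R * F d1.
Proof.
move=> H; rewrite (bigD1 d1) //= big1 ?addr0 // => d hd.
case: (boolP (P d)) => [/H e|_]; last by rewrite mul0r.
by rewrite e eqxx in hd.
Qed.

Lemma sum_two (T : finType) (F : T -> R) c0 d0 : c0 != d0 ->
  (forall c, c != c0 -> c != d0 -> F c = 0) -> \sum_c F c = F c0 + F d0.
Proof.
move=> cd H; rewrite (bigD1 c0) //= (bigD1 d0) /=; last by rewrite eq_sym.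
rewrite big1 ?addr0 ?addrA //.
by move=> c /andP[c1 c2]; apply: H.
Qed.

Definition Dv (x : 'I_n -> R) a := \sum_(e in G | a \in e) \prod_(i in e | i != a) x i.

Lemma lagr_sub (x : 'I_n -> R) a eps :
  lagr_poly G (fun i => x i - (i == a)%:R * eps) = lagr_poly G x - eps * Dv x a.
Proof.
rewrite /lagr_poly /Dv mulr_sumr [LHS](bigID (fun e : {set 'I_n} => a \in e)) /=.
rewrite [\sum_(e in G) _](bigID (fun e : {set 'I_n} => a \in e)) /=.
have -> : \sum_(i in G | a \notin i) \prod_(i0 in i) (x i0 - (i0 == a)%:R * eps)
   = \sum_(i in G | a \notin i) \prod_(i0 in i) x i0.
  apply: eq_bigr => e /andP[_ ha]; apply: eq_bigr => i hi.
  have -> : (i == a) = false by apply/eqP => E; move: ha; rewrite -E hi.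
  by rewrite mul0r subr0.
have -> : \sum_(i in G | a \in i) \prod_(i0 in i) (x i0 - (i0 == a)%:R * eps)
   = \sum_(i in G | a \in i) \prod_(i0 in i) x i0 -
     \sum_(i in G | a \in i) eps * \prod_(i0 in i | i0 != a) x i0.
  rewrite -sumrB; apply: eq_bigr => e /andP[_ ha].
  rewrite (bigD1 a) //= [X in _ = X - _](bigD1 a) //= eqxx mul1r.
  have -> : \prod_(i0 in e | i0 != a) (x i0 - (i0 == a)%:R * eps)
     = \prod_(i0 in e | i0 != a) x i0.
    by apply: eq_bigr => i /andP[_ /negbTE ->]; rewrite mul0r subr0.
  by rewrite mulrBl mulrC.
by rewrite addrAC.
Qed.

Lemma lagr_scale (z : 'I_n -> R) c : is_3graph G ->
  lagr_poly G (fun i => c * z i) = c ^+ 3 * lagr_poly G z.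
Proof.
move=> hG; rewrite /lagr_poly mulr_sumr; apply: eq_bigr => e he.
by rewrite prodrMl hG.
Qed.

Lemma Dv_ge0 (x : 'I_n -> R) a : (forall i, 0 <= x i) -> 0 <= Dv x a.
Proof. by move=> h; apply: sumr_ge0 => e _; apply: prodr_ge0 => i _. Qed.

Lemma kkt (x : 'I_n -> R) a : is_3graph G -> optimum_weight G x -> 0 < x a ->
  0 < lagrangian R G -> 3 * lagrangian R G <= Dv x a.
Proof.
move=> hG [hx hL] ha hpos.
set L := lagrangian R G in hL hpos *; set D := Dv x a.
have D0 : 0 <= D by apply: Dv_ge0; case: hx.
rewrite leNgt; apply/negP => hlt.
have xa1 : x a <= 1 by apply: simplex_le1.
set eps := x a * (3 * L - D) / (6 * L).
have heps : eps * (6 * L) = x a * (3 * L - D).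
  by rewrite /eps mulrVK // unitfE; apply: lt0r_neq0 ; nra.
have e0 : 0 < eps by rewrite /eps; apply: divr_gt0; [nra| nra].
have e1 : eps <= x a / 2 by nra.
have e2 : 3 * L * eps < 3 * L - D by nra.
set y := fun i => (1 - eps)^-1 * (x i - (i == a)%:R * eps).
have hy : in_simplex y.
  split.
    move=> i; rewrite /y; apply: mulr_ge0; first by rewrite invr_ge0; lra.
    case: (i =P a) => [->|_]; first by rewrite mul1r; lra.
    by rewrite mul0r subr0; case: hx.
  rewrite /y -mulr_sumr sumrB.
  have -> : \sum_i (i == a)%:R * eps = eps.
    rewrite (@sum_single _ (fun i => i == a) (fun _ => eps) a) ?eqxx ?mul1r //.
    by move=> d /eqP.
  by case: hx => _ ->; rewrite mulVf //; apply: lt0r_neq0; lra.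
have := @le_lagr y hy.

rewrite /y lagr_scale // lagr_sub hL -/L -/D => hle.
have hle2 : L - eps * D <= L * (1 - eps) ^+ 3.
  have -> : L - eps * D = (1 - eps) ^+ 3 * ((1 - eps)^-1 ^+ 3 * (L - eps * D)).
    by rewrite mulrA -exprMn mulfV ?expr1n ?mul1r //; apply: lt0r_neq0; lra.
  rewrite [L * _]mulrC; apply: ler_wpM2l => //; apply: exprn_ge0; lra.
have h4 : 0 <= L * eps ^+ 3 by apply: mulr_ge0; [lra| apply: exprn_ge0; lra].
have h3 : 0 <= eps * (D - 3 * L + 3 * L * eps).
  have -> : eps * (D - 3 * L + 3 * L * eps) = L * (1 - eps) ^+ 3 - (L - eps * D) + L * eps ^+ 3.
    by rewrite !exprS expr0; ring.
  lra.
rewrite pmulr_rge0 // in h3.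
lra.
Qed.

Lemma pair2 (e : {set 'I_n}) a (x : 'I_n -> R) : a \in e -> #|e| = 3%N ->
  2 * \prod_(i in e | i != a) x i = \sum_c \sum_d
    ((c \in e) && (d \in e) && (c != a) && (d != a) && (c != d))%:R * (x c * x d).
Proof.
move=> ha he.
have hS : #|e :\ a| == 2%N by move: he; rewrite (cardsD1 a) ha add1n => -[->].
case/cards2P: hS => c0 [d0 [cd hS]].
have mem c : (c \in e) && (c != a) = (c == c0) || (c == d0).
  by rewrite -in_set2 -hS in_setD1 andbC.
rewrite (eq_bigl (fun i => i \in [set c0; d0])); last first.
  by move=> i; rewrite /= in_set2 -mem.
rewrite big_setU1 /= ?big_set1; last by rewrite finset.in_set1.
rewrite (eq_bigr (fun c => \sum_d
    (((c == c0) || (c == d0)) && ((d == c0) || (d == d0)) && (c != d))%:R * (x c * x d))); last first.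
  move=> c _; apply: eq_bigr => d _; rewrite -!mem.
  by congr (_%:R * _); case: (c \in e); case: (d \in e); case: (c != a); case: (d != a).
rewrite (@sum_two _ _ c0 d0) //; last first.
  move=> c c1 c2; apply: big1 => d _.
  by rewrite (negbTE c1) (negbTE c2) mul0r.
rewrite !eqxx /= orbT /=.
rewrite (@sum_single _ (fun d => ((d == c0) || (d == d0)) && (c0 != d)) (fun d => x c0 * x d) d0); last first.
  by move=> d /andP[/orP[/eqP->|/eqP->//]]; rewrite eqxx.
rewrite (@sum_single _ (fun d => ((d == c0) || (d == d0)) && (d0 != d)) (fun d => x d0 * x d) c0); last first.
  by move=> d /andP[/orP[/eqP->//|/eqP->]]; rewrite eqxx.
rewrite !eqxx orbT /= cd eq_sym cd /= mulrC [x d0 * _]mulrC.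
by rewrite !mul1r mulr2n mulrDr mulr1.
Qed.

Lemma sqsum (f : 'I_n -> R) : \sum_c \sum_d f c * f d = (\sum_c f c) ^+ 2.
Proof. by rewrite expr2 mulr_suml; apply: eq_bigr => c _; rewrite mulr_sumr. Qed.

Lemma uniq_edge (e : {set 'I_n}) a c d : #|e| = 3%N -> a \in e -> c \in e -> d \in e ->
  c != a -> d != a -> c != d -> e = a |: [set c; d].
Proof.
move=> he ha hc hd ca da cd; apply/eqP; rewrite eq_sym eqEcard; apply/andP; split.
  apply/fintype.subsetP => i; rewrite in_setU1 in_set2.
  by case/orP=> [/eqP->|/orP[/eqP->|/eqP->]].
rewrite cardsU1 cards2 cd he in_set2 [a == c]eq_sym [a == d]eq_sym (negbTE ca) (negbTE da).
by [].
Qed.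

Lemma inner_bound (x : 'I_n -> R) a c d : is_3graph G -> (forall i, 0 <= x i) ->
  \sum_(e in G | a \in e)
    ((c \in e) && (d \in e) && (c != a) && (d != a) && (c != d))%:R * (x c * x d)
  <= ((c != a) && (d != a) && (c != d))%:R * (x c * x d).
Proof.
move=> hG hx.
have F0 : 0 <= x c * x d by apply: mulr_ge0.
rewrite big_mkcond /=.
rewrite (eq_bigr (fun e => ((e \in G) && (a \in e) &&
    ((c \in e) && (d \in e) && (c != a) && (d != a) && (c != d)))%:R * (x c * x d))); last first.
  by move=> e _; case: (e \in G); case: (a \in e) => //=; rewrite mul0r.
rewrite (@sum_single _ (fun e => ((e \in G) && (a \in e) &&
    ((c \in e) && (d \in e) && (c != a) && (d != a) && (c != d)))) (fun _ => x c * x d) (a |: [set c; d])); last first.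
  move=> e /andP[/andP[eG ae] /andP[/andP[/andP[/andP[ce de] ca] da] cd]].
  exact: uniq_edge (hG e eG) ae ce de ca da cd.
case: (c != a); case: (d != a); case: (c != d);
  rewrite /= ?andbF ?andbT ?andFb ?mul0r ?mul1r //;
  by case: (_ && _); rewrite /= ?mul0r ?mul1r.
Qed.

Lemma Dbound (x : 'I_n -> R) a b : is_3graph G -> in_simplex x -> a != b ->
  2 * Dv x a <= (1 - x a) ^+ 2 - x b ^+ 2.
Proof.
move=> hG hx ab; have hx0 := hx.1.
rewrite /Dv mulr_sumr.
under eq_bigr => e /andP[eG ae] do rewrite (@pair2 e a x ae (hG e eG)).
rewrite exchange_big /=.
under eq_bigr => c _ do rewrite exchange_big /=.
apply: (@le_trans _ _ (\sum_c \sum_d ((c != a) && (d != a) && (c != d))%:R * (x c * x d))).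
  by apply: ler_sum => c _; apply: ler_sum => d _; apply: inner_bound.
apply: (@le_trans _ _ (\sum_c \sum_d (((c != a)%:R * x c) * ((d != a)%:R * x d)
                        - ((c == b)%:R * x c) * ((d == b)%:R * x d)))).
  apply: ler_sum => c _; apply: ler_sum => d _.
  case: (eqVneq c b) => [->|cb].
    case: (eqVneq d b) => [->|db].
      by rewrite andbF mul0r eq_sym ab /= mul1r subrr.
    rewrite /= ?mul0r ?mulr0 ?subr0.
    case: (b != a); case: (d != a); rewrite /= ?mul0r ?mul1r ?mulr0 //.
  rewrite /= ?mul0r ?mulr0 ?subr0 ?mul0r ?subr0.
  case: (c != a); case: (d != a); rewrite /= ?mul0r ?mul1r ?mulr0 //.
  by case: (c != d); rewrite /= ?mul0r ?mul1r //; apply: mulr_ge0.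
under eq_bigr => c _ do rewrite sumrB.
rewrite sumrB !sqsum.
have -> : \sum_c (c == b)%:R * x c = x b.
  by rewrite (@sum_single _ (fun c => c == b) x b) ?eqxx ?mul1r // => c /eqP.
have -> : \sum_c (c != a)%:R * x c = 1 - x a.
  have -> : \sum_c (c != a)%:R * x c = \sum_c x c - x a.
    rewrite (bigD1 a) //= [in RHS](bigD1 a) //= eqxx mul0r add0r addrC addrK.
    by apply: eq_bigr => i /negbTE ->; rewrite mul1r.
  by case: hx => _ ->.
by [].
Qed.
End S.

Theorem claim5p4 (R : realType) (n : nat) (G : {set {set 'I_n}}) (x : 'I_n -> R) :
  is_3graph G -> dense R G -> K43e_free G ->
  Num.sqrt 3 / 18 < lagrangian R G ->
  optimum_weight G x ->
  forall a b : 'I_n, a != b -> x a + x b <= (3 - Num.sqrt 3) / 3.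
Proof.
move=> hG _ _ hL hopt a b ab.
have hx := hopt.1; have hx0 := hx.1.
have r0 : 0 <= Num.sqrt 3 :> R := sqrtr_ge0 _.
have r2 : Num.sqrt 3 * Num.sqrt 3 = 3 :> R by rewrite -expr2 sqr_sqrtr.
set r := Num.sqrt 3 in r0 r2 hL *.
set L := lagrangian R G in hL hopt *.
have Lpos : 0 < L by lra.
have key u v : u != v -> 0 < x u -> 6 * L <= (1 - x u) ^+ 2 - x v ^+ 2.
  move=> uv hu; have h1 := @kkt R n G x u hG hopt hu Lpos.
  apply: le_trans (@Dbound R n G x u v hG hx uv).
  have -> : 6 * L = 2 * (3 * L) by ring.
  by apply: ler_wpM2l.
have xa1 : x a <= 1 by apply: simplex_le1.
have xb1 : x b <= 1 by apply: simplex_le1.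
have xa0 := hx0 a; have xb0 := hx0 b.
have r1 : 1 < r by nra.
have r3 : r < 2 by nra.
have [ha|ha] : x a = 0 \/ 0 < x a by move: xa0; rewrite le_eqVlt => /orP[/eqP<-|->]; [left|right].
  have [hb|hb] : x b = 0 \/ 0 < x b by move: xb0; rewrite le_eqVlt => /orP[/eqP<-|->]; [left|right].
    rewrite ha hb; lra.
  have := key b a; rewrite eq_sym ab ha => /(_ isT hb).
  rewrite !expr2 => h; nra.
have [hb|hb] : x b = 0 \/ 0 < x b by move: xb0; rewrite le_eqVlt => /orP[/eqP<-|->]; [left|right].
  have := key a b ab ha; rewrite hb.
  rewrite !expr2 => h; nra.
have h1 := key a b ab ha; have := key b a; rewrite eq_sym ab => /(_ isT hb) => h2.
rewrite !expr2 in h1 h2; nra.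
Qed.
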